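(* Let $u_o>0$, $\alpha_1,\alpha_2\in\mathbb{R}$, and let $\boldsymbol{u}(x,t)=(u_1,u_2)^T$ be a smooth $\mathbb{C}^2$-valued function. Fix $z\in\mathbb{C}\setminus\{0\}$ and put $k=\frac12\left(z-\frac{u_o^2}{z}\right)$, $\lambda=\frac12\left(z+\frac{u_o^2}{z}\right)$. Suppose $\boldsymbol{\nu}_1(x,t)$ and $\boldsymbol{\nu}_2(x,t)$ are any two $\mathbb{C}^3$-valued solutions of the adjoint Lax system $$\tilde{\boldsymbol{\varphi}}_x=\tilde{\boldsymbol{X}}\tilde{\boldsymbol{\varphi}},\qquad \tilde{\boldsymbol{\varphi}}_t=\tilde{\boldsymbol{T}}\tilde{\boldsymbol{\varphi}}.$$ Then $$\boldsymbol{\nu}(x,t)=e^{ih_2(z,x,t)}\left[\boldsymbol{\nu}_1(x,t)\times\boldsymbol{\nu}_2(x,t)\right]$$ is a solution of the Lax system $\boldsymbol{\varphi}_x=\boldsymbol{X}\boldsymbol{\varphi}$, $\boldsymbol{\varphi}_t=\boldsymbol{T}\boldsymbol{\varphi}$.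
   Context: Notation. $\times$ denotes the (bilinear, unconjugated) cross product on $\mathbb{C}^3$, $\dagger$ denotes the conjugate transpose, and $^*$ denotes complex conjugation. Matrices. Set $$\boldsymbol{U}=\begin{pmatrix}0&-\boldsymbol{u}^\dagger\\ \boldsymbol{u}&0_{2\times2}\end{pmatrix},\qquad \boldsymbol{\sigma}=\mathrm{diag}(1,-1,-1).$$ Lax pair (here $\boldsymbol{U}_x=\partial_x\boldsymbol{U}$, etc.): $$\boldsymbol{X}=-ik\boldsymbol{\sigma}+\boldsymbol{U},$$ $$\boldsymbol{T}=\alpha_1\left[2ik^2\boldsymbol{\sigma}-2k\boldsymbol{U}+i\boldsymbol{\sigma}\left(\boldsymbol{U}^2+u_o^2-\boldsymbol{U}_x\right)\right]+\alpha_2\left[-4ik^3\boldsymbol{\sigma}+4k^2\boldsymbol{U}+2ik\boldsymbol{\sigma}\left(\boldsymbol{U}_x-\boldsymbol{U}^2\right)-\boldsymbol{U}\boldsymbol{U}_x+\boldsymbol{U}_x\boldsymbol{U}-\boldsymbol{U}_{xx}+2\boldsymbol{U}^3\right].$$ Adjoint Lax pair: $$\tilde{\boldsymbol{X}}=ik\boldsymbol{\sigma}+\boldsymbol{U}^*,$$ $$\tilde{\boldsymbol{T}}=\alpha_1\left[-2ik^2\boldsymbol{\sigma}-2k\boldsymbol{U}^*-i\boldsymbol{\sigma}\left((\boldsymbol{U}^* )^2+u_o^2-\boldsymbol{U}_x^*\right)\right]+\alpha_2\left[4ik^3\boldsymbol{\sigma}+4k^2\boldsymbol{U}^*-2ik\boldsymbol{\sigma}\left(\boldsymbol{U}_x^*-(\boldsymbol{U}^*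 )^2\right)+\boldsymbol{U}_x^*\boldsymbol{U}^*-\boldsymbol{U}^*\boldsymbol{U}_x^*-\boldsymbol{U}_{xx}^*+2(\boldsymbol{U}^* )^3\right].$$ Phase function: $$h_2(z,x,t)=kx-\left[\alpha_1(k^2+\lambda^2)-4\alpha_2k^3\right]t.$$ *)

(* Defs.v *)
From Stdlib Require Import Reals.
From Coquelicot Require Import Coquelicot.

(* Vectors of C^3 are functions nat -> C (only indices 0,1,2 matter);
   3x3 complex matrices are functions nat -> nat -> C (indices 0,1,2). *)
Definition vec3 := nat -> C.
Definition mat3 := nat -> nat -> C.

Local Open Scope C_scope.

Definition mv (A : mat3) (v : vec3) : vec3 :=
  fun i => A i 0%nat * v 0%nat + A i 1%nat * v 1%nat + A i 2%nat * v 2%nat.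
Definition mm (A B : mat3) : mat3 :=
  fun i j => A i 0%nat * B 0%nat j + A i 1%nat * B 1%nat j + A i 2%nat * B 2%nat j.
Definition madd (A B : mat3) : mat3 := fun i j => A i j + B i j.
Definition msub (A B : mat3) : mat3 := fun i j => A i j - B i j.
Definition mscal (c : C) (A : mat3) : mat3 := fun i j => c * A i j.
Definition mconj (A : mat3) : mat3 := fun i j => Cconj (A i j).
Definition mid : mat3 := fun i j => if Nat.eqb i j then 1 else 0.

Definition sigma : mat3 :=
  fun i j => if Nat.eqb i j then (if Nat.eqb i 0 then 1 else -1) else 0.

(* U = [[0, -u^dagger],[u, 0_{2x2}]] for u = (u1,u2)^T *)
Definition Umat (u1 u2 : C) : mat3 :=
  fun i j =>
    match i, j with
    | O, S O => - Cconj u1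
    | O, S (S O) => - Cconj u2
    | S O, O => u1
    | S (S O), O => u2
    | _, _ => 0
    end.

(* bilinear unconjugated cross product on C^3 *)
Definition cross (a b : vec3) : vec3 :=
  fun i =>
    match i with
    | O => a 1%nat * b 2%nat - a 2%nat * b 1%nat
    | S O => a 2%nat * b 0%nat - a 0%nat * b 2%nat
    | _ => a 0%nat * b 1%nat - a 1%nat * b 0%nat
    end.

Definition vscal (c : C) (v : vec3) : vec3 := fun i => c * v i.

Definition Cexp (w : C) : C :=
  (exp (Re w) * cos (Im w), exp (Re w) * sin (Im w))%R.

Definition kpar (uo : R) (z : C) : C := (z - RtoC (uo ^ 2) / z) / 2.
Definition lpar (uo : R) (z : C) : C := (z + RtoC (uo ^ 2) / z) / 2.

Definition Xmat (k : C) (U : mat3) : mat3 :=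
  madd (mscal (- Ci * k) sigma) U.

Definition Tmat (a1 a2 : R) (uo : R) (k : C) (U Ux Uxx : mat3) : mat3 :=
  madd
    (mscal (RtoC a1)
      (madd (madd (mscal (2 * Ci * k ^ 2) sigma) (mscal (- (2 * k)) U))
            (mscal Ci (mm sigma (msub (madd (mm U U) (mscal (RtoC (uo ^ 2)) mid)) Ux)))))
    (mscal (RtoC a2)
      (madd (madd (madd (madd (madd
        (mscal (- (4 * Ci * k ^ 3)) sigma)
        (mscal (4 * k ^ 2) U))
        (mscal (2 * Ci * k) (mm sigma (msub Ux (mm U U)))))
        (msub (mm Ux U) (mm U Ux)))
        (mscal (-1) Uxx))
        (mscal 2 (mm U (mm U U))))).

(* adjoint Lax pair; Us, Uxs, Uxxs stand for U^*, U_x^*, U_xx^* *)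
Definition Xtmat (k : C) (Us : mat3) : mat3 :=
  madd (mscal (Ci * k) sigma) Us.

Definition Ttmat (a1 a2 : R) (uo : R) (k : C) (Us Uxs Uxxs : mat3) : mat3 :=
  madd
    (mscal (RtoC a1)
      (madd (madd (mscal (- (2 * Ci * k ^ 2)) sigma) (mscal (- (2 * k)) Us))
            (mscal (- Ci) (mm sigma (msub (madd (mm Us Us) (mscal (RtoC (uo ^ 2)) mid)) Uxs)))))
    (mscal (RtoC a2)
      (madd (madd (madd (madd (madd
        (mscal (4 * Ci * k ^ 3) sigma)
        (mscal (4 * k ^ 2) Us))
        (mscal (- (2 * Ci * k)) (mm sigma (msub Uxs (mm Us Us)))))
        (msub (mm Uxs Us) (mm Us Uxs)))
        (mscal (-1) Uxxs))
        (mscal 2 (mm Us (mm Us Us))))).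

Definition h2 (a1 a2 uo : R) (z : C) (x t : R) : C :=
  kpar uo z * RtoC x
  - (RtoC a1 * (kpar uo z ^ 2 + lpar uo z ^ 2) - 4 * RtoC a2 * kpar uo z ^ 3) * RtoC t.

(* Main.v *)
Require Import Defs.
From Stdlib Require Import Reals.
From Coquelicot Require Import Coquelicot.
From Stdlib Require Import Lia.
Import Defs.

Lemma der_fst (f : R -> C) x (l : C) :
  is_derive f x l -> is_derive (fun y => fst (f y)) x (fst l).
Proof.
  intros H. unfold is_derive in *.
  eapply filterdiff_ext_lin.
  - apply (filterdiff_comp f (fun t : prod_NormedModule R_AbsRing R_NormedModule R_NormedModule => fst t) _ (fun t : prod_NormedModule R_AbsRing R_NormedModule R_NormedModule => fst t) H).
    apply filterdiff_linear, is_linear_fst.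
  - intros y. reflexivity.
Qed.

Lemma der_snd (f : R -> C) x (l : C) :
  is_derive f x l -> is_derive (fun y => snd (f y)) x (snd l).
Proof.
  intros H. unfold is_derive in *.
  eapply filterdiff_ext_lin.
  - apply (filterdiff_comp f (fun t : prod_NormedModule R_AbsRing R_NormedModule R_NormedModule => snd t) _ (fun t : prod_NormedModule R_AbsRing R_NormedModule R_NormedModule => snd t) H).
    apply filterdiff_linear, is_linear_snd.
  - intros y. reflexivity.
Qed.

Lemma der_pair (f g : R -> R) x a b :
  is_derive f x a -> is_derive g x b ->
  is_derive (fun y => (f y, g y) : C) x ((a, b) : C).
Proof.
  intros Ha Hb. unfold is_derive in *.
  eapply filterdiff_ext_lin.
  - apply (filterdiff_comp'_2 f g (fun u v => (u, v) : prod_NormedModule R_AbsRing R_NormedModule R_NormedModule) x _ _ (fun u v => (u, v)) Ha Hb).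
    apply filterdiff_linear.
    eapply is_linear_ext; [| apply (@is_linear_id R_AbsRing (prod_NormedModule R_AbsRing R_NormedModule R_NormedModule))].
    intros [u v]. reflexivity.
  - intros y. reflexivity.
Qed.

Lemma der_ext_val (f : R -> C) x (l l' : C) : l = l' -> is_derive f x l -> is_derive f x l'.
Proof. intros ->; auto. Qed.

Lemma der_C_split (f : R -> C) x (l : C) :
  is_derive (fun y => fst (f y)) x (fst l) -> is_derive (fun y => snd (f y)) x (snd l) ->
  is_derive f x l.
Proof.
  intros H1 H2. destruct l as [a b].
  eapply is_derive_ext; [| apply (der_pair _ _ x a b H1 H2)].
  intros t. simpl. destruct (f t); reflexivity.
Qed.

Lemma der_ext_val_R (f : R -> R) x l l' : l = l' -> is_derive f x l -> is_derive f x l'.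
Proof. intros ->; auto. Qed.

Open Scope C_scope.

Lemma Cder_mult (f g : R -> C) x df dg :
  is_derive f x df -> is_derive g x dg ->
  is_derive (fun y => f y * g y) x (df * g x + f x * dg : C).
Proof.
  intros Hf Hg.
  apply der_fst in Hf as Hf1. apply der_snd in Hf as Hf2.
  apply der_fst in Hg as Hg1. apply der_snd in Hg as Hg2.
  apply der_C_split.
  - pose proof (is_derive_minus _ _ _ _ _ (is_derive_mult _ _ _ _ _ Hf1 Hg1 Rmult_comm) (is_derive_mult _ _ _ _ _ Hf2 Hg2 Rmult_comm)) as K.
    refine (is_derive_ext _ _ _ _ _ (der_ext_val_R _ _ _ _ _ K)).
    + intros t. simpl. unfold minus, plus, opp, mult. simpl. ring.
    + destruct df, dg, (f x), (g x). simpl. unfold minus, plus, opp, mult. simpl. ring.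
  - pose proof (is_derive_plus _ _ _ _ _ (is_derive_mult _ _ _ _ _ Hf1 Hg2 Rmult_comm) (is_derive_mult _ _ _ _ _ Hf2 Hg1 Rmult_comm)) as K.
    refine (is_derive_ext _ _ _ _ _ (der_ext_val_R _ _ _ _ _ K)).
    + intros t. simpl. unfold minus, plus, opp, mult. simpl. ring.
    + destruct df, dg, (f x), (g x). simpl. unfold minus, plus, opp, mult. simpl. ring.
Qed.

Lemma Cder_const (c : C) x : is_derive (fun _ : R => c) x (0:C).
Proof.
  apply der_C_split; simpl.
  - exact (is_derive_const (V:=R_NormedModule) _ x).
  - exact (is_derive_const (V:=R_NormedModule) _ x).
Qed.

Lemma Cder_RtoC x : is_derive (fun y : R => RtoC y) x (1:C).
Proof.
  apply der_C_split; simpl.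
  - exact (is_derive_id x).
  - exact (is_derive_const (V:=R_NormedModule) _ x).
Qed.

Lemma Cder_plus (f g : R -> C) x df dg :
  is_derive f x df -> is_derive g x dg ->
  is_derive (fun y => f y + g y) x (df + dg : C).
Proof.
  intros Hf Hg.
  apply der_fst in Hf as Hf1. apply der_snd in Hf as Hf2.
  apply der_fst in Hg as Hg1. apply der_snd in Hg as Hg2.
  apply der_C_split.
  - exact (is_derive_plus _ _ _ _ _ Hf1 Hg1).
  - exact (is_derive_plus _ _ _ _ _ Hf2 Hg2).
Qed.

Lemma Cder_opp (f : R -> C) x df :
  is_derive f x df -> is_derive (fun y => - f y) x (- df : C).
Proof.
  intros Hf.
  apply der_fst in Hf as Hf1. apply der_snd in Hf as Hf2.
  apply der_C_split.
  - exact (is_derive_opp _ _ _ Hf1).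
  - exact (is_derive_opp _ _ _ Hf2).
Qed.

Lemma Cder_minus (f g : R -> C) x df dg :
  is_derive f x df -> is_derive g x dg ->
  is_derive (fun y => f y - g y) x (df - dg : C).
Proof.
  intros Hf Hg. apply (Cder_plus f (fun y => - g y)); auto. apply Cder_opp; auto.
Qed.

Lemma Cder_exp (w : R -> C) x dw :
  is_derive w x dw -> is_derive (fun y => Cexp (w y)) x (dw * Cexp (w x) : C).
Proof.
  intros Hw.
  apply der_fst in Hw as H1. apply der_snd in Hw as H2.
  pose proof (is_derive_comp exp _ x _ _ (is_derive_exp _) H1) as E.
  pose proof (is_derive_comp cos _ x _ _ (is_derive_cos _) H2) as Co.
  pose proof (is_derive_comp sin _ x _ _ (is_derive_sin _) H2) as Si.
  apply der_C_split; unfold Cexp; simpl.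
  - refine (der_ext_val_R _ _ _ _ _ (is_derive_mult _ _ _ _ _ E Co Rmult_comm)).
    unfold plus, mult, scal, opp. simpl. unfold mult. simpl. unfold Re, Im. ring.
  - refine (der_ext_val_R _ _ _ _ _ (is_derive_mult _ _ _ _ _ E Si Rmult_comm)).
    unfold plus, mult, scal, opp. simpl. unfold mult. simpl. unfold Re, Im. ring.
Qed.

Lemma der_nu (w : R -> C) (n1 n2 : R -> vec3) x dw (A : mat3) :
  is_derive w x dw ->
  (forall j, (j < 3)%nat -> is_derive (fun y => n1 y j) x (mv A (n1 x) j)) ->
  (forall j, (j < 3)%nat -> is_derive (fun y => n2 y j) x (mv A (n2 x) j)) ->
  forall i, (i < 3)%nat ->
  is_derive (fun y => Cexp (w y) * cross (n1 y) (n2 y) i) x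
    (dw * Cexp (w x) * cross (n1 x) (n2 x) i
     + Cexp (w x) * (cross (mv A (n1 x)) (n2 x) i + cross (n1 x) (mv A (n2 x)) i) : C).
Proof.
  intros Hw H1 H2 i Hi.
  assert (E := Cder_exp _ _ _ Hw).
  assert (D : forall p q, (p < 3)%nat -> (q < 3)%nat ->
    is_derive (fun y => n1 y p * n2 y q) x
      (mv A (n1 x) p * n2 x q + n1 x p * mv A (n2 x) q : C)).
  { intros p q Hp Hq. apply Cder_mult; auto. }
  destruct i as [|[|[|i]]]; [| | | exfalso; lia]; simpl.
  - eapply der_ext_val; [| apply Cder_mult; [exact E | apply Cder_minus; apply D; lia]].
    cbv beta; ring.
  - eapply der_ext_val; [| apply Cder_mult; [exact E | apply Cder_minus; apply D; lia]].
    cbv beta; ring.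
  - eapply der_ext_val; [| apply Cder_mult; [exact E | apply Cder_minus; apply D; lia]].
    cbv beta; ring.
Qed.

Definition mtr (A : mat3) : C := A 0%nat 0%nat + A 1%nat 1%nat + A 2%nat 2%nat.

Lemma key (A B : mat3) (dw e : C) (n1 n2 : vec3) i :
  (forall p q, (p < 3)%nat -> (q < 3)%nat ->
     B p q = (if Nat.eqb p q then dw + mtr A else 0) - A q p) ->
  (i < 3)%nat ->
  dw * e * cross n1 n2 i + e * (cross (mv A n1) n2 i + cross n1 (mv A n2) i)
  = mv B (vscal e (cross n1 n2)) i.
Proof.
  intros HB Hi. unfold mv, vscal, mtr.
  destruct i as [|[|[|i]]]; [| | | exfalso; lia]. all: simpl. all:
  rewrite !HB by lia; unfold mtr; simpl; ring.
Qed.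

Lemma Cconj0 : Cconj 0 = 0.
Proof. unfold Cconj. simpl. rewrite Ropp_0. reflexivity. Qed.

Lemma Xentries (k u1 u2 : C) p q : (p < 3)%nat -> (q < 3)%nat ->
  Xmat k (Umat u1 u2) p q =
  (if Nat.eqb p q then Ci * k + mtr (Xtmat k (mconj (Umat u1 u2))) else 0)
  - Xtmat k (mconj (Umat u1 u2)) q p.
Proof.
  intros Hp Hq. unfold Xmat, Xtmat, madd, mscal, mconj, mtr, sigma.
  destruct p as [|[|[|p]]]; try lia; destruct q as [|[|[|q]]]; try lia; simpl;
  rewrite ?Copp_conj, ?Cconj_conj, ?Cconj0; ring.
Qed.

Lemma Tentries (a1 a2 uo : R) (k u1 u2 v1 v2 w1 w2 : C) p q : (p < 3)%nat -> (q < 3)%nat ->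
  Tmat a1 a2 uo k (Umat u1 u2) (Umat v1 v2) (Umat w1 w2) p q =
  (if Nat.eqb p q then
     Ci * - (RtoC a1 * (2 * k ^ 2 + RtoC (uo ^ 2)) - 4 * RtoC a2 * k ^ 3)
     + mtr (Ttmat a1 a2 uo k (mconj (Umat u1 u2)) (mconj (Umat v1 v2)) (mconj (Umat w1 w2)))
   else 0)
  - Ttmat a1 a2 uo k (mconj (Umat u1 u2)) (mconj (Umat v1 v2)) (mconj (Umat w1 w2)) q p.
Proof.
  intros Hp Hq. unfold Tmat, Ttmat, madd, msub, mm, mid, mscal, mconj, mtr, sigma.
  destruct p as [|[|[|p]]]; try lia; destruct q as [|[|[|q]]]; try lia; simpl;
  rewrite ?Copp_conj, ?Cconj_conj, ?Cconj0; ring.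
Qed.

Lemma phase_x a1 a2 uo z t x :
  is_derive (fun y => (Ci * h2 a1 a2 uo z y t)%C) x (Ci * kpar uo z : C).
Proof.
  eapply der_ext_val; [| apply (Cder_mult (fun _ => Ci) (fun y => h2 a1 a2 uo z y t)); [apply Cder_const|]].
  2:{ unfold h2. apply Cder_minus.
      - apply (Cder_mult (fun _ => kpar uo z) (fun y => RtoC y)); [apply Cder_const | apply Cder_RtoC].
      - apply Cder_const. }
  cbv beta. ring.
Qed.

Lemma phase_t a1 a2 uo z t x : z <> RtoC 0 ->
  is_derive (fun s => (Ci * h2 a1 a2 uo z x s)%C) t
    (Ci * - (RtoC a1 * (2 * kpar uo z ^ 2 + RtoC (uo ^ 2)) - 4 * RtoC a2 * kpar uo z ^ 3) : C).
Proof.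
  intros hz.
  eapply der_ext_val; [| apply (Cder_mult (fun _ => Ci) (fun s => h2 a1 a2 uo z x s)); [apply Cder_const|]].
  2:{ unfold h2. apply Cder_minus.
      - apply Cder_const.
      - apply (Cder_mult (fun _ => _) (fun y => RtoC y)); [apply Cder_const | apply Cder_RtoC]. }
  cbv beta.
  assert (L : lpar uo z ^ 2 = kpar uo z ^ 2 + RtoC (uo ^ 2)).
  { unfold lpar, kpar. field. exact hz. }
  rewrite L. ring.
Qed.

Close Scope C_scope.

Theorem proposition3
  (uo a1 a2 : R) (huo : (0 < uo)%R)
  (u1 u2 u1x u2x u1xx u2xx : R -> R -> C)
  (hu1x : forall x t : R, is_derive (fun y => u1 y t) x (u1x x t))
  (hu2x : forall x t : R, is_derive (fun y => u2 y t) x (u2x x t))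
  (hu1xx : forall x t : R, is_derive (fun y => u1x y t) x (u1xx x t))
  (hu2xx : forall x t : R, is_derive (fun y => u2x y t) x (u2xx x t))
  (z : C) (hz : z <> RtoC 0)
  (nu1 nu2 : R -> R -> vec3)
  (hnu_x : forall (nu : R -> R -> vec3), (nu = nu1 \/ nu = nu2) ->
     forall (x t : R) (i : nat), (i < 3)%nat ->
       is_derive (fun y => nu y t i) x
         (mv (Xtmat (kpar uo z) (mconj (Umat (u1 x t) (u2 x t)))) (nu x t) i))
  (hnu_t : forall (nu : R -> R -> vec3), (nu = nu1 \/ nu = nu2) ->
     forall (x t : R) (i : nat), (i < 3)%nat ->
       is_derive (fun s => nu x s i) t
         (mv (Ttmat a1 a2 uo (kpar uo z)
                (mconj (Umat (u1 x t) (u2 x t)))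
                (mconj (Umat (u1x x t) (u2x x t)))
                (mconj (Umat (u1xx x t) (u2xx x t)))) (nu x t) i)) :
  let nu : R -> R -> vec3 :=
    fun x t => vscal (Cexp (Ci * h2 a1 a2 uo z x t)) (cross (nu1 x t) (nu2 x t)) in
  forall (x t : R) (i : nat), (i < 3)%nat ->
    is_derive (fun y => nu y t i) x
      (mv (Xmat (kpar uo z) (Umat (u1 x t) (u2 x t))) (nu x t) i)
    /\
    is_derive (fun s => nu x s i) t
      (mv (Tmat a1 a2 uo (kpar uo z)
             (Umat (u1 x t) (u2 x t))
             (Umat (u1x x t) (u2x x t))
             (Umat (u1xx x t) (u2xx x t))) (nu x t) i).
Proof.
  intros nu x t i Hi. split.
  - pose proof (der_nu (fun y => (Ci * h2 a1 a2 uo z y t)%C) (fun y => nu1 y t) (fun y => nu2 y t) x _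
      (Xtmat (kpar uo z) (mconj (Umat (u1 x t) (u2 x t))))
      (phase_x a1 a2 uo z t x)
      (fun j Hj => hnu_x nu1 (or_introl eq_refl) x t j Hj)
      (fun j Hj => hnu_x nu2 (or_intror eq_refl) x t j Hj) i Hi) as H.
    eapply der_ext_val; [| exact H].
    apply key; [| exact Hi]. intros p q Hp Hq. apply Xentries; auto.
  - pose proof (der_nu (fun s => (Ci * h2 a1 a2 uo z x s)%C) (fun s => nu1 x s) (fun s => nu2 x s) t _
      (Ttmat a1 a2 uo (kpar uo z)
                (mconj (Umat (u1 x t) (u2 x t)))
                (mconj (Umat (u1x x t) (u2x x t)))
                (mconj (Umat (u1xx x t) (u2xx x t))))
      (phase_t a1 a2 uo z t x hz)
      (fun j Hj => hnu_t nu1 (or_introl eq_refl) x t j Hj)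
      (fun j Hj => hnu_t nu2 (or_intror eq_refl) x t j Hj) i Hi) as H.
    eapply der_ext_val; [| exact H].
    apply key; [| exact Hi]. intros p q Hp Hq. apply Tentries; auto.
Qed.
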